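(* There exist absolute constants $C,c>0$ such that for every integer $v\ge0$ and real $\lambda\ge\frac12$: \begin{enumerate} \item $c(v+\lambda)^{-1}\exp(\Psi_{v,\lambda}-\lambda)\le(-1)^vA_{v,\lambda}\le C(v+\lambda)\exp(\Psi_{v,\lambda}-\lambda)$ and $c(v+\lambda)^{-1}\exp(\Psi_{v,\lambda}+\lambda)\le B_{v,\lambda}\le C(v+\lambda)\exp(\Psi_{v,\lambda}+\lambda)$; \item if moreover $v\le\lambda$, then $c(v+\lambda)^{-1}\exp(\Psi_{v,\lambda}-\lambda)\le(-1)^vA_{v,\lambda}\le C\lambda^{-1/2}\exp(\Psi_{v,\lambda}-\lambda)$. \end{enumerate}
   Context: For integer $v\ge0$ and real $\lambda>0$ define $A_{v,\lambda}=2e^{-\lambda}(-1)^v\sum_{n\ge v,\ n-v\in2\mathbb{Z}}\frac{\lambda^n}{2^n n!}\binom{n}{(n-v)/2}$ and $B_{v,\lambda}=2e^{\lambda}\sum_{n\ge v,\ n-v\in2\mathbb{Z}}\frac{\lambda^n}{2^n n!}\binom{n}{(n-v)/2}$, and $\Psi_{v,\lambda}=\sqrt{v^2+\lambda^2}+v\log\Big(\frac{\sqrt{v^2+\lambda^2}-v}{\lambda}\Big)$ (natural logarithm). *)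

(* Defs.v *)
From Stdlib Require Import Reals.
From Coquelicot Require Import Coquelicot.
Open Scope R_scope.

(* The inner sum  sum_{n >= v, n - v even} lambda^n / (2^n n!) * binom(n, (n-v)/2),
   reindexed by n = v + 2k (k >= 0), so that (n-v)/2 = k. *)
Definition inner_term (v : nat) (lam : R) (k : nat) : R :=
  let n := (v + 2 * k)%nat in
  lam ^ n / (2 ^ n * INR (Factorial.fact n)) * Binomial.C n k.

Definition inner_sum (v : nat) (lam : R) : R := Series (inner_term v lam).

Definition A_coef (v : nat) (lam : R) : R :=
  2 * exp (- lam) * (-1) ^ v * inner_sum v lam.

Definition B_coef (v : nat) (lam : R) : R :=
  2 * exp lam * inner_sum v lam.

Definition Psi (v : nat) (lam : R) : R :=
  sqrt (INR v ^ 2 + lam ^ 2)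
  + INR v * ln ((sqrt (INR v ^ 2 + lam ^ 2) - INR v) / lam).

(* Main.v *)
Require Import Defs.
From Stdlib Require Import Reals Lra Lia Psatz.
From Coquelicot Require Import Coquelicot.
Open Scope R_scope.

Lemma exp_series (x : R) : is_series (fun k => x ^ k / INR (Factorial.fact k)) (exp x).
Proof.
  generalize (is_exp_Reals x). unfold is_pseries.
  apply is_series_ext. intro n. rewrite pow_n_pow. reflexivity.
Qed.

Lemma exp_pow_INR (a : R) (n : nat) : exp (INR n * a) = exp a ^ n.
Proof.
  induction n as [|n IH]. simpl. rewrite Rmult_0_l. apply exp_0.
  rewrite S_INR, Rmult_plus_distr_r, Rmult_1_l, exp_plus, IH. simpl. ring.
Qed.

Lemma ln_lower (u : R) : 0 <= u -> 2 * u / (2 + u) <= ln (1 + u).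
Proof.
  intro Hu.
  set (f := fun t => ln (1 + t) - 2 * t / (2 + t)).
  destruct (Req_dec u 0) as [->|Hu0].
  { rewrite Rmult_0_r, Rdiv_0_l, Rplus_0_r, ln_1. lra. }
  destruct (MVT_gen f 0 u (fun t => t^2 / ((1+t) * (2+t)^2))) as [c [Hc Heq]].
  - intros x Hx. rewrite Rmin_left in Hx by lra. rewrite Rmax_right in Hx by lra.
    unfold f. auto_derive. lra. field. lra.
  - intros x Hx. rewrite Rmin_left in Hx by lra. rewrite Rmax_right in Hx by lra.
    apply derivable_continuous_pt, ex_derive_Reals_0.
    unfold f. auto_derive. lra.
  - rewrite Rmin_left in Hc by lra. rewrite Rmax_right in Hc by lra.
    assert (0 <= c^2 / ((1+c) * (2+c)^2)).
    { apply Rdiv_le_0_compat. nra. apply Rmult_lt_0_compat. lra. nra. }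
    unfold f in Heq. rewrite Rplus_0_r, ln_1, Rmult_0_r, Rdiv_0_l in Heq. nra.
Qed.

Lemma ln_upper (u : R) : 0 <= u -> ln (1 + u) <= u * (6 + u) / (6 + 4 * u).
Proof.
  intro Hu.
  set (f := fun t => t * (6 + t) / (6 + 4 * t) - ln (1 + t)).
  destruct (Req_dec u 0) as [->|Hu0].
  { rewrite Rplus_0_r, ln_1. lra. }
  destruct (MVT_gen f 0 u (fun t => 4 * t^3 / ((1+t) * (6+4*t)^2))) as [c [Hc Heq]].
  - intros x Hx. rewrite Rmin_left in Hx by lra. rewrite Rmax_right in Hx by lra.
    unfold f. auto_derive. lra. field. lra.
  - intros x Hx. rewrite Rmin_left in Hx by lra. rewrite Rmax_right in Hx by lra.
    apply derivable_continuous_pt, ex_derive_Reals_0.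
    unfold f. auto_derive. lra.
  - rewrite Rmin_left in Hc by lra. rewrite Rmax_right in Hc by lra.
    assert (0 <= 4 * c^3 / ((1+c) * (6+4*c)^2)).
    { apply Rdiv_le_0_compat. assert (0 <= c^3) by (apply pow_le; lra). lra.
      apply Rmult_lt_0_compat. lra. nra. }
    unfold f in Heq. cbv beta in Heq. rewrite !Rplus_0_r, ln_1 in Heq.
    replace (0 * 6 / (6 + 4 * 0)) with 0 in Heq by field. nra.
Qed.

Lemma pow_exp_ln (q : R) (n : nat) : 0 < q -> q ^ n = exp (INR n * ln q).
Proof. intro H. rewrite exp_pow_INR, exp_ln by exact H. reflexivity. Qed.

Lemma expN_mul a : exp (- a) * exp a = 1.
Proof. rewrite <- exp_plus. replace (- a + a) with 0 by ring. apply exp_0. Qed.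

Lemma one_le_exp a : 0 <= a -> 1 <= exp a.
Proof. intro H. generalize (exp_ineq1_le a). lra. Qed.

Lemma exp_mono (a b : R) : a <= b -> exp a <= exp b.
Proof. intro H. destruct (Rle_lt_or_eq_dec _ _ H) as [Hlt|Heq]. left; apply exp_increasing; exact Hlt. rewrite Heq; right; reflexivity. Qed.

Lemma ratio_lower (j : nat) : (1 <= j)%nat ->
  exp 2 <= (1 + / INR j) ^ (2 * j + 1).
Proof.
  intro Hj. assert (HJ : 1 <= INR j) by (apply (le_INR 1); exact Hj).
  assert (Hu : 0 <= / INR j) by (apply Rlt_le, Rinv_0_lt_compat; lra).
  rewrite pow_exp_ln by (apply Rplus_lt_le_0_compat; lra).
  apply exp_mono. generalize (ln_lower _ Hu). intro Hl.
  replace (INR (2 * j + 1)) with (2 * INR j + 1) by (rewrite plus_INR, mult_INR; simpl; ring).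
  apply Rle_trans with ((2 * INR j + 1) * (2 * / INR j / (2 + / INR j))).
  right. field. lra.
  apply Rmult_le_compat_l. lra. exact Hl.
Qed.

Lemma ratio_upper (j : nat) : (1 <= j)%nat ->
  (1 + / INR j) ^ (2 * j + 1) <= exp (2 + / (2 * INR j) - / (2 * (INR j + 1))).
Proof.
  intro Hj. assert (HJ : 1 <= INR j) by (apply (le_INR 1); exact Hj).
  assert (Hu : 0 <= / INR j) by (apply Rlt_le, Rinv_0_lt_compat; lra).
  rewrite pow_exp_ln by (apply Rplus_lt_le_0_compat; lra).
  apply exp_mono. generalize (ln_upper _ Hu). intro Hl.
  replace (INR (2 * j + 1)) with (2 * INR j + 1) by (rewrite plus_INR, mult_INR; simpl; ring).
  apply Rle_trans with ((2 * INR j + 1) * (/ INR j * (6 + / INR j) / (6 + 4 * / INR j))).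
  apply Rmult_le_compat_l. lra. exact Hl.
  set (J := INR j) in *. clearbody J.
  replace ((2 * J + 1) * (/ J * (6 + / J) / (6 + 4 * / J))) with (2 + / (J * (6 * J + 4))) . 2:{ field. split; apply Rgt_not_eq; lra. }
  assert (/ (J * (6 * J + 4)) <= / (2 * J) - / (2 * (J + 1))).
  { replace (/ (2 * J) - / (2 * (J + 1))) with (/ (2 * J * (J + 1))) by (field; split; apply Rgt_not_eq; lra).
    apply Rinv_le_contravar. nra. nra. }
  lra.
Qed.

Lemma pow_ratio (J : R) (m : nat) : 0 < J -> (J + 1) ^ m = (1 + / J) ^ m * J ^ m.
Proof. intro H. rewrite <- Rpow_mult_distr. f_equal. field. lra. Qed.

Lemma stir_up (n : nat) :
  INR (Factorial.fact (S n)) ^ 2 * exp (2 * INR (S n)) <= exp 2 * INR (S n) ^ (2 * S n + 1).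
Proof.
  induction n as [|n IH].
  - simpl. rewrite !Rmult_1_r, !Rmult_1_l. right; reflexivity.
  - assert (Hr := ratio_lower (S n) ltac:(lia)).
    set (m := (2 * S n + 1)%nat) in *.
    replace (2 * S (S n) + 1)%nat with (m + 2)%nat by (unfold m; lia).
    rewrite fact_simpl, mult_INR, pow_add.
    replace (INR (S (S n))) with (INR (S n) + 1) by (rewrite (S_INR (S n)); ring).
    assert (HJ : 1 <= INR (S n)) by (apply (le_INR 1); lia).
    set (J := INR (S n)) in *. clearbody J.
    set (F := INR (Factorial.fact (S n))) in *. clearbody F.
    rewrite (pow_ratio J m) by lra.
    replace (2 * (J + 1)) with (2 * J + 2) by ring. rewrite exp_plus.
    assert (HJm : 0 <= J ^ m) by (apply pow_le; lra).
    assert (He : 0 < exp 2) by apply exp_pos.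
    assert (H1 : 0 <= (J+1)^2) by (apply pow_le; lra).
    replace (((J + 1) * F) ^ 2 * (exp (2 * J) * exp 2)) with ((J+1)^2 * exp 2 * (F ^ 2 * exp (2 * J))) by ring.
    apply Rle_trans with ((J+1)^2 * exp 2 * (exp 2 * J ^ m)).
    apply Rmult_le_compat_l. nra. exact IH.
    replace (exp 2 * ((1 + / J) ^ m * J ^ m * (J + 1) ^ 2)) with ((J+1)^2 * exp 2 * ((1 + / J) ^ m * J ^ m)) by ring.
    apply Rmult_le_compat_l. nra. nra.
Qed.

Lemma stir_low (n : nat) :
  exp (3/2 + / (2 * INR (S n))) * INR (S n) ^ (2 * S n + 1)
  <= INR (Factorial.fact (S n)) ^ 2 * exp (2 * INR (S n)).
Proof.
  induction n as [|n IH].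
  - simpl. rewrite !Rmult_1_r, !Rmult_1_l. right. f_equal. field.
  - assert (Hr := ratio_upper (S n) ltac:(lia)).
    set (m := (2 * S n + 1)%nat) in *.
    replace (2 * S (S n) + 1)%nat with (m + 2)%nat by (unfold m; lia).
    rewrite fact_simpl, mult_INR, pow_add.
    replace (INR (S (S n))) with (INR (S n) + 1) by (rewrite (S_INR (S n)); ring).
    assert (HJ : 1 <= INR (S n)) by (apply (le_INR 1); lia).
    set (J := INR (S n)) in *. clearbody J.
    set (F := INR (Factorial.fact (S n))) in *. clearbody F.
    rewrite (pow_ratio J m) by lra.
    replace (exp (2 * (J + 1))) with (exp (2*J) * exp 2) by (rewrite <- exp_plus; f_equal; ring).
    assert (HJm : 0 <= J ^ m) by (apply pow_le; lra).
    assert (H1 : 0 <= (J+1)^2) by (apply pow_le; lra).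
    assert (Ha : 0 < exp (3 / 2 + / (2 * (J + 1)))) by apply exp_pos.
    apply Rle_trans with (exp (3 / 2 + / (2 * (J + 1))) * (exp (2 + / (2 * J) - / (2 * (J + 1))) * J ^ m * (J+1)^2)).
    { rewrite <- !Rmult_assoc. apply Rmult_le_compat_r. exact H1.
      rewrite !Rmult_assoc. apply Rmult_le_compat_l. lra. apply Rmult_le_compat_r. exact HJm. exact Hr. }
    replace (exp (3 / 2 + / (2 * (J + 1))) * (exp (2 + / (2 * J) - / (2 * (J + 1))) * J ^ m * (J + 1) ^ 2))
      with ((J+1)^2 * exp 2 * (exp (3/2 + / (2 * J)) * J ^ m)).
    2:{ assert (Hx : exp (3 / 2 + / (2 * (J + 1))) * exp (2 + / (2 * J) - / (2 * (J + 1)))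
          = exp 2 * exp (3/2 + / (2 * J))).
        { rewrite <- !exp_plus. f_equal. ring. }
        transitivity ((J+1)^2 * J^m * (exp (3 / 2 + / (2 * (J + 1))) * exp (2 + / (2 * J) - / (2 * (J + 1))))).
        rewrite Hx. ring. ring. }
    replace (((J + 1) * F) ^ 2 * (exp (2 * J) * exp 2)) with ((J+1)^2 * exp 2 * (F ^ 2 * exp (2 * J))) by ring.
    apply Rmult_le_compat_l. assert (0 < exp 2) by apply exp_pos. nra. exact IH.
Qed.

Lemma stir_low' (n : nat) :
  INR (S n) ^ (2 * S n + 1) <= INR (Factorial.fact (S n)) ^ 2 * exp (2 * INR (S n)).
Proof.
  eapply Rle_trans. 2: apply stir_low.
  assert (0 <= INR (S n) ^ (2 * S n + 1)) by (apply pow_le, pos_INR).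
  assert (1 <= exp (3/2 + / (2 * INR (S n)))).
  { rewrite <- exp_0. apply exp_mono. assert (0 < / (2 * INR (S n))).
    apply Rinv_0_lt_compat. assert (0 < INR (S n)) by apply lt_0_INR, Nat.lt_0_succ. lra. lra. }
  nra.
Qed.

Definition pmf (X : R) (j : nat) : R := X ^ j * exp (- X) / INR (Factorial.fact j).

Lemma pmf_nonneg X j : 0 <= X -> 0 <= pmf X j.
Proof.
  intro H. unfold pmf. apply Rdiv_le_0_compat.
  apply Rmult_le_pos. apply pow_le, H. apply Rlt_le, exp_pos. apply INR_fact_lt_0.
Qed.

Lemma pow_exp_bound X n : 0 <= X ->
  X ^ (S n) * exp (- X) <= INR (S n) ^ (S n) * exp (- INR (S n)).
Proof.
  intro HX. set (J := INR (S n)).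
  assert (HJ : 0 < J) by (apply lt_0_INR; lia).
  set (t := X / J).
  assert (Ht : 0 <= t) by (apply Rdiv_le_0_compat; lra).
  assert (HXt : X = t * J) by (unfold t; field; lra).
  assert (H1 : t <= exp (t - 1)) by (generalize (exp_ineq1_le (t - 1)); lra).
  assert (H2 : t ^ (S n) <= exp (X - J)).
  { replace (X - J) with (J * (t - 1)) by (rewrite HXt; ring).
    unfold J. rewrite exp_pow_INR. apply pow_incr. lra. }
  assert (HXp : X ^ S n = t ^ S n * J ^ S n) by (rewrite HXt, Rpow_mult_distr; reflexivity).
  rewrite HXp.
  assert (0 <= J ^ S n) by (apply pow_le; lra).
  apply Rle_trans with (exp (X - J) * J ^ S n * exp (- X)).
  { apply Rmult_le_compat_r. apply Rlt_le, exp_pos. apply Rmult_le_compat_r; lra. }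
  right. replace (exp (X - J) * J ^ S n * exp (- X)) with (J ^ S n * (exp (X - J) * exp (- X))) by ring.
  rewrite <- exp_plus. f_equal. f_equal. ring.
Qed.

Lemma pmf_sq_le_inv X n : 0 <= X -> pmf X (S n) ^ 2 <= / INR (S n).
Proof.
  intro HX. set (J := INR (S n)).
  assert (HJ : 0 < J) by (apply lt_0_INR; lia).
  set (F := INR (Factorial.fact (S n))).
  assert (HF : 0 < F) by apply INR_fact_lt_0.
  assert (Hb := pow_exp_bound X n HX). fold J in Hb.
  assert (Hs := stir_low' n). fold J F in Hs.
  assert (H0 : 0 <= pmf X (S n)) by (apply pmf_nonneg; exact HX).
  assert (H1 : pmf X (S n) <= J ^ S n * exp (- J) / F).
  { unfold pmf. fold F. apply Rmult_le_compat_r. apply Rlt_le, Rinv_0_lt_compat, HF. exact Hb. }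
  apply Rle_trans with ((J ^ S n * exp (- J) / F) ^ 2).
  { apply pow_incr. lra. }
  replace (2 * S n + 1)%nat with (S n + S n + 1)%nat in Hs by lia.
  rewrite !pow_add in Hs.
  assert (HE : exp (- J) * exp (2 * J) = exp J) by (rewrite <- exp_plus; f_equal; ring).
  assert (HE2 : exp (- J) * exp J = 1) by (rewrite <- exp_plus, <- exp_0; f_equal; ring).
  assert (0 < exp J) by apply exp_pos.
  assert (0 < J ^ S n) by (apply pow_lt; lra).
  (* (J^j e^{-J}/F)^2 <= 1/J  <=> J * J^{2j} e^{-2J} <= F^2 *)
  apply Rle_trans with ((J ^ S n * J ^ S n * J ^ 1) * (exp (- J) * exp (- J)) / F ^ 2 * / J).
  { right. field. lra. }
  apply Rle_trans with (F ^ 2 * exp (2 * J) * (exp (- J) * exp (- J)) / F ^ 2 * / J).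
  { apply Rmult_le_compat_r. apply Rlt_le, Rinv_0_lt_compat; lra.
    apply Rmult_le_compat_r. apply Rlt_le, Rinv_0_lt_compat, pow_lt; lra.
    apply Rmult_le_compat_r. apply Rlt_le, Rmult_lt_0_compat; apply exp_pos. exact Hs. }
  right. replace (F ^ 2 * exp (2 * J) * (exp (- J) * exp (- J)) / F ^ 2 * / J)
    with ((exp (- J) * exp (2 * J)) * exp (- J) * / J) by (field; lra).
  rewrite HE, (Rmult_comm (exp J)), HE2. ring.
Qed.

Lemma pmf_le_1 X j : 0 <= X -> pmf X j <= 1.
Proof.
  intro HX. destruct j as [|n].
  - unfold pmf. simpl. rewrite Rmult_1_l, Rdiv_1_r.
    rewrite <- exp_0. apply exp_mono. lra.
  - assert (H := pmf_sq_le_inv X n HX). assert (H0 := pmf_nonneg X (S n) HX).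
    assert (HJ : 1 <= INR (S n)) by (apply (le_INR 1); lia).
    assert (/ INR (S n) <= 1) by (rewrite <- Rinv_1; apply Rinv_le_contravar; lra).
    nra.
Qed.

Lemma pmf_step X i : pmf X (S i) = pmf X i * X / INR (S i).
Proof.
  unfold pmf. rewrite fact_simpl, mult_INR. simpl (X ^ S i).
  field. split. apply INR_fact_neq_0. apply not_0_INR; lia.
Qed.

Lemma pmf_mono X : 0 <= X -> forall d i, INR (i + d) <= X -> pmf X i <= pmf X (i + d).
Proof.
  intros HX d. induction d as [|d IH]; intros i H.
  - rewrite Nat.add_0_r. lra.
  - replace (i + S d)%nat with (S (i + d)) in * by lia.
    assert (H' : INR (i + d) <= X) by (rewrite S_INR in H; lra).
    apply Rle_trans with (pmf X (i + d)). apply IH, H'.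
    rewrite pmf_step. assert (0 <= pmf X (i + d)) by (apply pmf_nonneg; lra).
    assert (0 < INR (S (i + d))) by (apply lt_0_INR; lia).
    assert (1 <= X / INR (S (i + d))).
    { apply (Rmult_le_reg_r (INR (S (i + d)))). lra. unfold Rdiv. rewrite Rmult_assoc, Rinv_l by lra. lra. }
    unfold Rdiv in *. rewrite Rmult_assoc. nra.
Qed.

Lemma pmf_max X j : 0 < X -> pmf X j ^ 2 <= 2 / X.
Proof.
  intro HX.
  assert (H0 := pmf_nonneg X j ltac:(lra)). assert (H1 := pmf_le_1 X j ltac:(lra)).
  destruct (Rle_lt_dec X 2) as [HX2|HX2].
  { assert (1 <= 2 / X) by (apply (Rmult_le_reg_r X); [lra|]; unfold Rdiv; rewrite Rmult_assoc, Rinv_l by lra; lra).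
    nra. }
  destruct (Rle_lt_dec (X / 2) (INR j)) as [Hj|Hj].
  - destruct j as [|n]. simpl in Hj. lra.
    apply Rle_trans with (/ INR (S n)). apply pmf_sq_le_inv. lra.
    replace (2 / X) with (/ (X / 2)) by (field; lra).
    apply Rinv_le_contravar. lra. exact Hj.
  - destruct (nfloor_ex (X / 2) ltac:(lra)) as [n Hn].
    assert (Hjn : (j <= S n)%nat).
    { apply INR_le. rewrite S_INR. lra. }
    assert (Hm := pmf_mono X ltac:(lra) (S n - j) j).
    replace (j + (S n - j))%nat with (S n) in Hm by lia.
    assert (HnX : INR (S n) <= X) by (rewrite S_INR; lra).
    specialize (Hm HnX).
    apply Rle_trans with (pmf X (S n) ^ 2). apply pow_incr. lra.
    apply Rle_trans with (/ INR (S n)). apply pmf_sq_le_inv. lra.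
    replace (2 / X) with (/ (X / 2)) by (field; lra).
    apply Rinv_le_contravar. lra. rewrite S_INR. lra.
Qed.

Lemma pmf_lower Z m : 0 <= Z -> INR m <= Z < INR m + 1 -> / (exp 4 * (Z + 1)) <= pmf Z m ^ 2.
Proof.
  intros HZ [Hm1 Hm2].
  assert (He4 : exp 2 * exp 2 = exp 4) by (rewrite <- exp_plus; f_equal; ring).
  assert (He2 : 1 <= exp 2) by (rewrite <- exp_0; apply exp_mono; lra).
  destruct m as [|n].
  - unfold pmf. simpl. rewrite Rmult_1_l, Rdiv_1_r, Rmult_1_r.
    simpl in Hm2.
    assert (Hx : exp (- Z) * exp (- Z) = / exp (2 * Z)).
    { rewrite <- exp_plus, <- exp_Ropp. f_equal. ring. }
    rewrite Hx. apply Rinv_le_contravar. apply exp_pos.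
    assert (exp (2 * Z) <= exp 4) by (apply exp_mono; lra).
    assert (0 < exp 4) by apply exp_pos. nra.
  - assert (Hs := stir_up n).
    assert (Hp2 : exp (- INR (S n)) * exp (-1) <= exp (- Z)) by (rewrite <- exp_plus; apply exp_mono; lra).
    assert (HJ : 1 <= INR (S n)) by (apply (le_INR 1); lia).
    assert (Hp1 : INR (S n) ^ S n <= Z ^ S n) by (apply pow_incr; lra).
    assert (Hlow : INR (S n) ^ S n * exp (- INR (S n)) * exp (-1) / INR (Factorial.fact (S n)) <= pmf Z (S n)).
    { unfold pmf. apply Rmult_le_compat_r. apply Rlt_le, Rinv_0_lt_compat, INR_fact_lt_0.
      rewrite Rmult_assoc. apply Rmult_le_compat; try lra. apply pow_le; lra.
      apply Rlt_le, Rmult_lt_0_compat; apply exp_pos. }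
    replace (2 * S n + 1)%nat with (S n + S n + 1)%nat in Hs by lia.
    rewrite !pow_add in Hs.
    rewrite exp_Ropp in Hlow. replace (exp (-1)) with (/ exp 1) in Hlow by (rewrite <- exp_Ropp; reflexivity).
    replace (exp (2 * INR (S n))) with (exp (INR (S n)) * exp (INR (S n))) in Hs by (rewrite <- exp_plus; f_equal; ring).
    replace (exp 2) with (exp 1 * exp 1) in Hs by (rewrite <- exp_plus; f_equal; ring).
    replace (exp 4) with (exp 1 ^ 4) by (rewrite <- exp_pow_INR; f_equal; simpl; ring).
    set (J := INR (S n)) in *. set (F := INR (Factorial.fact (S n))) in *.
    assert (HF : 0 < F) by apply INR_fact_lt_0.
    set (a := J ^ S n) in *. set (E := exp J) in *. set (e := exp 1) in *.
    assert (Ha : 0 < a) by (apply pow_lt; lra).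
    assert (HE : 0 < E) by apply exp_pos. assert (He : 0 < e) by apply exp_pos.
    clearbody a E e F J.
    assert (Hq : 0 <= a * / E * / e / F).
    { apply Rlt_le. unfold Rdiv. repeat apply Rmult_lt_0_compat; try apply Rinv_0_lt_compat; lra. }
    apply Rle_trans with ((a * / E * / e / F) ^ 2).
    2:{ apply pow_incr. lra. }
    replace ((a * / E * / e / F) ^ 2) with (/ (E^2 * e^2 * F^2 / a^2)) by (field; repeat split; lra).
    assert (0 < E^2 * e^2 * F^2) by (apply Rmult_lt_0_compat; [apply Rmult_lt_0_compat|]; apply pow_lt; lra).
    apply Rinv_le_contravar. apply Rdiv_lt_0_compat. lra. apply pow_lt; lra.
    apply (Rmult_le_reg_r (a ^ 2)). apply pow_lt; lra.
    replace (E ^ 2 * e ^ 2 * F ^ 2 / a ^ 2 * a ^ 2) with (e ^ 2 * (F ^ 2 * (E * E))) by (field; lra).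
    assert (H2 : F ^ 2 * (E * E) <= e * e * (a * a * J)) by (simpl in Hs |- *; lra).
    assert (0 < e^2) by (apply pow_lt; lra).
    apply Rle_trans with (e ^ 2 * (e * e * (a * a * J))).
    apply Rmult_le_compat_l. lra. exact H2.
    assert (0 < a * a) by nra.
    replace (e ^ 4 * (Z + 1) * a ^ 2) with (e^2 * (e * e * (a * a * (Z + 1)))) by ring.
    apply Rmult_le_compat_l. lra. apply Rmult_le_compat_l. nra. apply Rmult_le_compat_l. lra. lra.
Qed.

Lemma Series_zero : Series (fun _ => 0) = 0.
Proof.
  transitivity (Series (fun n : nat => 0 * 1)).
  apply Series_ext. intro; ring.
  rewrite (Series_scal_l 0 (fun _ => 1)). ring.
Qed.

Lemma series_term_le (a : nat -> R) n : (forall k, 0 <= a k) -> ex_series a -> a n <= Series a.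
Proof.
  intros Hpos Hex. rewrite (Series_incr_n a (S n)) by (lia || exact Hex).
  simpl pred.
  assert (0 <= Series (fun k => a (S n + k)%nat)).
  { rewrite <- Series_zero. apply Series_le. intro k. split. lra. apply Hpos.
    apply (ex_series_incr_n a (S n)) in Hex. exact Hex. }
  assert (a n <= sum_f_R0 a n).
  { destruct n as [|n]. simpl. lra. simpl. assert (0 <= sum_f_R0 a n) by (apply cond_pos_sum; exact Hpos). lra. }
  lra.
Qed.

Lemma pmf_series Y : is_series (pmf Y) 1.
Proof.
  assert (H := is_series_scal_l (exp (- Y)) _ _ (exp_series Y)).
  unfold scal in H; simpl in H; unfold mult in H; simpl in H.
  rewrite exp_Ropp, Rinv_l in H by (apply Rgt_not_eq, exp_pos).
  revert H. apply is_series_ext. intro n. unfold pmf. change (/ exp Y * (Y ^ n / INR (Factorial.fact n)) = Y ^ n * exp (- Y) / INR (Factorial.fact n)). rewrite exp_Ropp. field. split; [apply Rgt_not_eq, exp_pos | apply INR_fact_neq_0].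
Qed.

Lemma pow_div (a b : R) n : b <> 0 -> (a / b) ^ n = a ^ n / b ^ n.
Proof. intro H. unfold Rdiv. rewrite Rpow_mult_distr, pow_inv. reflexivity. Qed.

Lemma term_eq v k lam X Y r : 0 < lam -> r * X = lam / 2 -> X * Y = lam ^ 2 / 4 ->
  inner_term v lam k = exp (X + Y) * r ^ v * pmf X (v + k) * pmf Y k.
Proof.
  intros Hl HrX HXY.
  assert (Hp : r ^ v * X ^ (v + k) * Y ^ k = lam ^ (v + 2 * k) / 2 ^ (v + 2 * k)).
  { rewrite pow_add, <- Rmult_assoc, <- Rpow_mult_distr, HrX, Rmult_assoc, <- Rpow_mult_distr, HXY.
    rewrite <- pow_div by lra. rewrite pow_add, pow_mult.
    replace ((lam / 2) ^ 2) with (lam ^ 2 / 4) by field. reflexivity. }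
  unfold inner_term, Binomial.C, pmf. cbv zeta.
  replace (v + 2 * k - k)%nat with (v + k)%nat by lia.
  assert (F1 := INR_fact_neq_0 (v + 2 * k)). assert (F2 := INR_fact_neq_0 (v + k)).
  assert (F3 := INR_fact_neq_0 k).
  assert (H2 : 2 ^ (v + 2 * k) <> 0) by (apply pow_nonzero; lra).
  transitivity (lam ^ (v + 2 * k) / 2 ^ (v + 2 * k) / (INR (Factorial.fact k) * INR (Factorial.fact (v + k)))).
  { field. repeat split; assumption. }
  rewrite <- Hp. rewrite exp_plus, !exp_Ropp.
  assert (exp X <> 0) by (apply Rgt_not_eq, exp_pos).
  assert (exp Y <> 0) by (apply Rgt_not_eq, exp_pos).
  field. repeat split; assumption.
Qed.

Lemma main_bounds v lam : 1/2 <= lam ->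
  0 <= inner_sum v lam /\ inner_sum v lam <= exp (Psi v lam) /\
  inner_sum v lam <= 2 / sqrt lam * exp (Psi v lam) /\
  / (3 * exp 4 * (INR v + lam)) * exp (Psi v lam) <= inner_sum v lam.
Proof.
  intro Hlam.
  assert (HV : 0 <= INR v) by apply pos_INR.
  unfold inner_sum, Psi.
  set (V := INR v) in *.
  set (s := sqrt (V ^ 2 + lam ^ 2)).
  assert (Hs2 : s * s = V ^ 2 + lam ^ 2) by (apply sqrt_sqrt; nra).
  assert (Hs0 : 0 <= s) by apply sqrt_pos.
  assert (HsV : V < s) by nra.
  assert (Hsl : lam <= s) by nra.
  assert (HsL : s <= V + lam) by nra.
  set (X := (s + V) / 2). set (Y := (s - V) / 2). set (r := (s - V) / lam).
  assert (HX : lam / 2 <= X) by (unfold X; lra).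
  assert (HY : 0 < Y) by (unfold Y; lra).
  assert (Hr : 0 < r) by (unfold r; apply Rdiv_lt_0_compat; lra).
  assert (HrX : r * X = lam / 2).
  { unfold r, X. replace ((s - V) / lam * ((s + V) / 2)) with ((s * s - V * V) / (2 * lam)) by (field; lra).
    rewrite Hs2. field. lra. }
  assert (HXY : X * Y = lam ^ 2 / 4).
  { unfold X, Y. replace ((s + V) / 2 * ((s - V) / 2)) with ((s * s - V * V) / 4) by field.
    rewrite Hs2. field. }
  assert (HE : exp (s + V * ln r) = exp (X + Y) * r ^ v).
  { replace (X + Y) with s by (unfold X, Y; field). rewrite exp_plus. f_equal.
    unfold V. rewrite <- pow_exp_ln by exact Hr. reflexivity. }
  fold r. rewrite HE.
  set (E := exp (X + Y) * r ^ v).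
  assert (HE0 : 0 < E) by (apply Rmult_lt_0_compat; [apply exp_pos | apply pow_lt, Hr]).
  assert (Hterm : forall k, inner_term v lam k = E * pmf X (v + k) * pmf Y k).
  { intro k. rewrite (term_eq v k lam X Y r) by (lra || assumption). reflexivity. }
  assert (Hpos : forall k, 0 <= inner_term v lam k).
  { intro k. rewrite Hterm. apply Rmult_le_pos. apply Rmult_le_pos. lra.
    apply pmf_nonneg; lra. apply pmf_nonneg; lra. }
  assert (Hup : forall M, (forall j, pmf X j <= M) ->
            ex_series (inner_term v lam) /\ Series (inner_term v lam) <= E * M).
  { intros M HM.
    assert (Hle : forall k, 0 <= inner_term v lam k <= E * M * pmf Y k).
    { intro k. split. apply Hpos. rewrite Hterm.
      apply Rmult_le_compat_r. apply pmf_nonneg; lra. apply Rmult_le_compat_l; [lra | apply HM]. }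
    assert (Hex : ex_series (fun k => E * M * pmf Y k)).
    { apply (ex_series_scal_l (E * M) (pmf Y)). exists 1. apply pmf_series. }
    split.
    - apply (@ex_series_le R_AbsRing R_CompleteNormedModule) with (fun k => E * M * pmf Y k).
      intro n. unfold norm; simpl. unfold abs; simpl. rewrite Rabs_pos_eq by apply Hpos. apply Hle.
      exact Hex.
    - apply Rle_trans with (Series (fun k => E * M * pmf Y k)).
      apply Series_le. exact Hle. exact Hex.
      rewrite Series_scal_l, (is_series_unique _ _ (pmf_series Y)). lra. }
  assert (HM1 : forall j, pmf X j <= 1) by (intro j; apply pmf_le_1; lra).
  destruct (Hup 1 HM1) as [Hex Hup1].
  assert (HM2 : forall j, pmf X j <= 2 / sqrt lam).
  { intro j. assert (Hq := pmf_max X j ltac:(lra)).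
    assert (H0 := pmf_nonneg X j ltac:(lra)).
    assert (Hsq : sqrt lam * sqrt lam = lam) by (apply sqrt_sqrt; lra).
    assert (Hsp : 0 < sqrt lam) by (apply sqrt_lt_R0; lra).
    assert (Hc : (2 / sqrt lam) ^ 2 = 4 / lam).
    { rewrite pow_div by lra. replace (sqrt lam ^ 2) with lam by (simpl; rewrite Rmult_1_r; symmetry; exact Hsq). field. lra. }
    assert (H4 : 2 / X <= 4 / lam).
    { replace (2 / X) with (4 * / (2 * X)) by (field; lra). unfold Rdiv.
      apply Rmult_le_compat_l. lra. apply Rinv_le_contravar; lra. }
    assert (0 <= 2 / sqrt lam) by (apply Rdiv_le_0_compat; lra).
    nra. }
  destruct (Hup _ HM2) as [_ Hup2].
  split. { rewrite <- Series_zero. apply Series_le. intro; split; [lra|apply Hpos]. exact Hex. }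
  split. lra. split. lra.
  destruct (nfloor_ex Y ltac:(lra)) as [m Hm].
  apply Rle_trans with (inner_term v lam m). 2: apply series_term_le; assumption.
  rewrite Hterm.
  assert (HXm : INR (v + m) <= X < INR (v + m) + 1).
  { rewrite plus_INR. fold V. replace X with (Y + V) by (unfold X, Y; field). lra. }
  assert (H1 := pmf_lower X (v + m) ltac:(lra) HXm).
  assert (H2 := pmf_lower Y m ltac:(lra) Hm).
  set (L := V + lam) in *.
  assert (HL : (X + 1) * (Y + 1) <= 9 * L ^ 2).
  { replace ((X + 1) * (Y + 1)) with (X * Y + (X + Y) + 1) by ring. rewrite HXY.
    replace (X + Y) with s by (unfold X, Y; field). unfold L in *. nra. }
  assert (Hp1 := pmf_nonneg X (v + m) ltac:(lra)).
  assert (Hp2 := pmf_nonneg Y m ltac:(lra)).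
  set (p := pmf X (v + m)) in *. set (q := pmf Y m) in *.
  assert (He4 : 0 < exp 4) by apply exp_pos.
  assert (HL0 : 0 < L) by (unfold L; lra).
  assert (Hpq : / (3 * exp 4 * L) <= p * q).
  { assert (Hsq : (/ (3 * exp 4 * L)) ^ 2 <= (p * q) ^ 2).
    { rewrite Rpow_mult_distr.
      apply Rle_trans with (/ (exp 4 * (X + 1)) * / (exp 4 * (Y + 1))).
      2:{ apply Rmult_le_compat; try assumption. apply Rlt_le, Rinv_0_lt_compat. nra.
          apply Rlt_le, Rinv_0_lt_compat. nra. }
      rewrite <- Rinv_mult, pow_inv.  apply Rinv_le_contravar. nra.
      replace ((3 * exp 4 * L) ^ 2) with (exp 4 * exp 4 * (9 * L ^ 2)) by ring.
      replace (exp 4 * (X + 1) * (exp 4 * (Y + 1))) with (exp 4 * exp 4 * ((X + 1) * (Y + 1))) by ring.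
      apply Rmult_le_compat_l. nra. exact HL. }
    assert (0 <= / (3 * exp 4 * L)) by (apply Rlt_le, Rinv_0_lt_compat; nra).
    assert (0 <= p * q) by nra. nra. }
  replace (E * p * q) with (p * q * E) by ring. apply Rmult_le_compat_r; lra.
Qed.

Theorem proposition4p1 :
  exists Cst cst : R, 0 < Cst /\ 0 < cst /\
  forall (v : nat) (lam : R), 1 / 2 <= lam ->
    ( (cst * / (INR v + lam) * exp (Psi v lam - lam) <= (-1) ^ v * A_coef v lam
       /\ (-1) ^ v * A_coef v lam <= Cst * (INR v + lam) * exp (Psi v lam - lam))
      /\
      (cst * / (INR v + lam) * exp (Psi v lam + lam) <= B_coef v lam
       /\ B_coef v lam <= Cst * (INR v + lam) * exp (Psi v lam + lam)) )
    /\
    (INR v <= lam ->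
       cst * / (INR v + lam) * exp (Psi v lam - lam) <= (-1) ^ v * A_coef v lam
       /\ (-1) ^ v * A_coef v lam <= Cst * / sqrt lam * exp (Psi v lam - lam)).
Proof.
  assert (He4 : 0 < exp 4) by apply exp_pos.
  exists 4, (2 / (3 * exp 4)). split. lra. split.
  { apply Rdiv_lt_0_compat; lra. }
  intros v lam Hlam.
  destruct (main_bounds v lam Hlam) as [H0 [H1 [H2 H3]]].
  assert (HA : (-1) ^ v * A_coef v lam = 2 * exp (- lam) * inner_sum v lam).
  { unfold A_coef.
    assert (Hs : (-1) ^ v * (-1) ^ v = 1) by (rewrite <- Rpow_mult_distr; replace (-1 * -1) with 1 by ring; apply pow1).
    transitivity (2 * exp (- lam) * ((-1) ^ v * (-1) ^ v) * inner_sum v lam). ring. rewrite Hs. ring. }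
  rewrite HA. unfold B_coef.
  assert (HV : 0 <= INR v) by apply pos_INR.
  set (L := INR v + lam) in *.
  assert (HL : 1/2 <= L) by (unfold L; lra).
  set (S := inner_sum v lam) in *. set (E := exp (Psi v lam)) in *.
  assert (HE : 0 < E) by apply exp_pos.
  rewrite !exp_plus. unfold Rminus. rewrite exp_plus. fold E.
  assert (Hem : 0 < exp (- lam)) by apply exp_pos.
  assert (Hep : 0 < exp lam) by apply exp_pos.
  assert (Hlow : 2 / (3 * exp 4) * / L * E <= 2 * S).
  { replace (2 / (3 * exp 4) * / L * E) with (2 * (/ (3 * exp 4 * L) * E)) by (field; lra). lra. }
  assert (Hup : 2 * S <= 4 * L * E) by nra.
  assert (Hsq : 2 * S <= 4 * / sqrt lam * E).
  { replace (4 * / sqrt lam * E) with (2 * (2 / sqrt lam * E)) by (unfold Rdiv; ring). lra. }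
  split; [split; split|].
  - replace (2 / (3 * exp 4) * / L * (E * exp (- lam))) with ((2 / (3 * exp 4) * / L * E) * exp (- lam)) by ring.
    replace (2 * exp (- lam) * S) with (2 * S * exp (- lam)) by ring. nra.
  - replace (4 * L * (E * exp (- lam))) with (4 * L * E * exp (- lam)) by ring.
    replace (2 * exp (- lam) * S) with (2 * S * exp (- lam)) by ring. nra.
  - replace (2 / (3 * exp 4) * / L * (E * exp lam)) with ((2 / (3 * exp 4) * / L * E) * exp lam) by ring.
    replace (2 * exp lam * S) with (2 * S * exp lam) by ring. nra.
  - replace (4 * L * (E * exp lam)) with (4 * L * E * exp lam) by ring.
    replace (2 * exp lam * S) with (2 * S * exp lam) by ring. nra.
  - intros _. split.
    + replace (2 / (3 * exp 4) * / L * (E * exp (- lam))) with ((2 / (3 * exp 4) * / L * E) * exp (- lam)) by ring.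
      replace (2 * exp (- lam) * S) with (2 * S * exp (- lam)) by ring. nra.
    + replace (4 * / sqrt lam * (E * exp (- lam))) with (4 * / sqrt lam * E * exp (- lam)) by ring.
      replace (2 * exp (- lam) * S) with (2 * S * exp (- lam)) by ring. nra.
Qed.
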